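(* Let $(A, b, c)$ be a $k$-level LP instance such that, except for the last ($k$-th) player's problem, there are no linear constraints (i.e., $m_l = 0$ for all $l = 1, \ldots, k-1$; all linear constraints appear only in the $k$-th player's problem). Then, for any $\lambda \in \mathbb{R}$ with $\lambda > 0$, the feasible set of the instance $(A, \lambda b, c)$ equals $\lambda$ times the feasible set of the instance $(A, b, c)$.
   Context: A $k$-level LP instance $(A,b,c)$ has data $A_{li} \in \mathbb{Q}^{m_l \times n_i}$, $b_l \in \mathbb{Q}^{m_l}$, $c_{li} \in \mathbb{Q}^{n_i}$. Player $l$ chooses $x_l \in \mathbb{R}^{n_l}$ after players $1,\ldots,l-1$. The $l$-th player's problem, given $x_1,\ldots,x_{l-1}$, is $\inf_{x_l,\ldots,x_k}\{\sum_{i=l}^k c_{li}^\top x_i : \sum_{i=1}^k A_{li}x_i \ge b_l,\ (x_{l+1},\ldots,x_k) \in \mathcal{S}(\text{problem of player } l+1 \text{ given } x_1,\ldots,x_l)\}$, and the $k$-th player's problem is $\inf_{x_k}\{c_{kk}^\top x_k : \sum_{i=1}^k A_{ki}x_i \ge b_k\}$. The instance is identified with the first player's problem; its feasible set is the set of feasible $(x_1,\ldots,x_k)$ of the first player's problem. $\mathcal{S}(\cdot)$ denotes the optimal solution set (optimistic setting). *)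

(* Defs.v *)
From HB Require Import structures.
From mathcomp Require Import all_boot all_order all_algebra.
From mathcomp Require Import reals.
Set Implicit Arguments. Unset Strict Implicit. Unset Printing Implicit Defensive.
Import Order.TTheory GRing.Theory Num.Theory.
Local Open Scope ring_scope.

(* Levels/players are indexed by 'I_k (player l+1 in the paper is index l).
   n i : number of variables of player i, m l : number of constraints of
   player l. *)

Section MultiLevelLP.
Variables (R : realType) (k : nat) (m n : 'I_k -> nat).
Variables (A : forall l i : 'I_k, 'M[R]_(m l, n i))
          (b : forall l : 'I_k, 'cV[R]_(m l))
          (c : forall l i : 'I_k, 'cV[R]_(n i)).

Definition profile := forall i : 'I_k, 'cV[R]_(n i).

Definition mlp_constr (l : 'I_k) (x : profile) : Prop :=
  forall r : 'I_(m l), b l r 0 <= (\sum_(i : 'I_k) A l i *m x i) r 0.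

Definition mlp_obj (l : 'I_k) (x : profile) : R :=
  \sum_(i : 'I_k | (l <= i)%N) ((c l i)^T *m x i) 0 0.

(* mlp_feas_from d x : x is feasible for the problem of the player at level
   k - d (0-based), given the decisions x_i, i < k - d, of earlier players.
   The tail from level (k-d)+1 must lie in the optimal solution set
   (optimistic setting) of the next player's problem given the prefix. *)
Fixpoint mlp_feas_from (d : nat) (x : profile) : Prop :=
  match d with
  | 0 => True
  | d'.+1 =>
      (forall l : 'I_k, val l = (k - d'.+1)%N -> mlp_constr l x) /\
      mlp_feas_from d' x /\
      (match d' with
       | 0 => True
       | _.+1 =>
           forall y : profile,
             (forall i : 'I_k, (i < k - d')%N -> y i = x i) ->
             mlp_feas_from d' y ->
             forall l : 'I_k, val l = (k - d')%N -> mlp_obj l x <= mlp_obj l y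
       end)
  end.

Definition mlp_feasible_set : profile -> Prop := mlp_feas_from k.

End MultiLevelLP.

Definition scale_profiles (R : realType) (k : nat) (n : 'I_k -> nat)
  (lam : R) (S : profile R n -> Prop) : profile R n -> Prop :=
  fun x => exists y, S y /\ x = (fun i => lam *: y i).

(* Main.v *)
Require Import Defs.
From HB Require Import structures.
From mathcomp Require Import all_boot all_order all_algebra.
From mathcomp Require Import reals.
From Stdlib Require Import FunctionalExtensionality PropExtensionality.
Set Implicit Arguments. Unset Strict Implicit.
Import Order.TTheory GRing.Theory Num.Theory.
Local Open Scope ring_scope.

Section Aux.
Variables (R : realType) (k : nat) (m n : 'I_k -> nat).
Variables (A : forall l i : 'I_k, 'M[R]_(m l, n i))
          (b : forall l : 'I_k, 'cV[R]_(m l))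
          (c : forall l i : 'I_k, 'cV[R]_(n i)).

Definition sc (a : R) (x : profile R n) : profile R n := fun i => a *: x i.

Lemma sc_inv (a : R) (x : profile R n) : 0 < a -> sc a (sc a^-1 x) = x.
Proof.
move=> ha; apply: functional_extensionality_dep => i.
by rewrite /sc scalerA divff ?scale1r // gt_eqF.
Qed.

Lemma constr_sc (a : R) (ha : 0 < a) l y :
  mlp_constr A (fun l => a *: b l) l (sc a y) <-> mlp_constr A b l y.
Proof.
have E : \sum_(i : 'I_k) A l i *m sc a y i = a *: \sum_(i : 'I_k) A l i *m y i.
  rewrite scaler_sumr; apply: eq_bigr => i _; by rewrite /sc scalemxAr.
rewrite /mlp_constr E; split => H r; have := H r; rewrite !mxE.
  by rewrite ler_pM2l.
by rewrite ler_pM2l.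
Qed.

Lemma obj_sc (a : R) l y :
  mlp_obj c l (sc a y) = a * mlp_obj c l y.
Proof.
rewrite /mlp_obj mulr_sumr; apply: eq_bigr => i _.
by rewrite /sc -scalemxAr mxE.
Qed.

Lemma feas_sc (a : R) (ha : 0 < a) d : forall y,
  mlp_feas_from A (fun l => a *: b l) c d (sc a y) <-> mlp_feas_from A b c d y.
Proof.
elim: d => [|d IH] y /=; first by [].
have HC : (forall l : 'I_k, val l = (k - d.+1)%N ->
             mlp_constr A (fun l => a *: b l) l (sc a y)) <->
          (forall l : 'I_k, val l = (k - d.+1)%N -> mlp_constr A b l y).
  by split => H l hl; [apply (constr_sc ha l y).1 | apply (constr_sc ha l y).2]; apply: H.
case: d IH HC => [|d] IH HC.
  by rewrite HC IH.
rewrite HC IH; split => -[H1 [H2 H3]]; split => //; split => //.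
- move=> z hz fz l hl.
  have := H3 (sc a z) _ _ l hl.
  rewrite !obj_sc ler_pM2l //; apply.
    by move=> i hi; rewrite /sc hz.
  by apply/IH.
- move=> z hz fz l hl.
  have -> : mlp_obj c l z = mlp_obj c l (sc a (sc a^-1 z)) by rewrite sc_inv.
  rewrite [X in X <= _]obj_sc [X in _ <= X]obj_sc ler_pM2l //.
  apply: (H3 (sc a^-1 z) _ _ l hl).
    move=> i hi; rewrite /sc (hz i hi) /sc scalerA mulVf ?scale1r //.
    by rewrite gt_eqF.
  by apply/IH; rewrite sc_inv.
Qed.
End Aux.

Theorem lemma3p2 (R : realType) (k : nat) (m n : 'I_k -> nat)
  (A : forall l i : 'I_k, 'M[R]_(m l, n i))
  (b : forall l : 'I_k, 'cV[R]_(m l))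
  (c : forall l i : 'I_k, 'cV[R]_(n i))
  (hm : forall l : 'I_k, (val l < k.-1)%N -> m l = 0%N)
  (lam : R) (hlam : 0 < lam) :
  mlp_feasible_set A (fun l => lam *: b l) c =
  scale_profiles lam (mlp_feasible_set A b c).
Proof.
apply: functional_extensionality => x.
apply: propositional_extensionality.
rewrite /mlp_feasible_set /scale_profiles; split.
- move=> H; exists (sc lam^-1 x); split.
    by apply/(feas_sc A b c hlam); rewrite sc_inv.
  by have := sc_inv x hlam.
- by move=> [y [Hy ->]]; apply/(feas_sc A b c hlam).
Qed.
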